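(* Let $I$ be a single-category instance with $n$ agents, $m$ goods and cardinality constraint $k$ with $m\le kn$. Let $\mathcal{A}^*=(A^*_1,\dots,A^*_n)$ be a utilitarian-optimal allocation, and let $R=\{i:|A^*_i|<k\}$ and $S=\{i:|A^*_i|>k\}$, and suppose $S\neq\emptyset$. Then there exist an agent $i^\dagger\in R$ and a cardinal allocation $\mathcal{A}$ such that $$\text{USW}(\mathcal{A})\ge 1+\sum_{i\in S}\frac{k}{|A^*_i|}\bigl(u_i(A^*_i)-u_{i^\dagger}(A^*_i)\bigr).$$
   Context: Each agent $i$ has an additive utility function $u_i:2^M\to\mathbb{R}_{\ge 0}$ with $u_i(\emptyset)=0$ and $u_i(M)=1$. An allocation is a partition $(A_1,\dots,A_n)$ of $M$; it is cardinal if $|A_i|\le k$ for all $i$. $\text{USW}(\mathcal{A})=\sum_i u_i(A_i)$; a utilitarian-optimal allocation is one maximizing $\text{USW}$ over all allocations. *)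

(* Defs.v *)
From mathcomp Require Import all_boot all_order all_algebra.
Set Implicit Arguments. Unset Strict Implicit. Unset Printing Implicit Defensive.
Import Order.TTheory GRing.Theory Num.Theory.
Local Open Scope ring_scope.

Definition util {R : numDomainType} {n m : nat}
  (v : 'I_n -> 'I_m -> R) (i : 'I_n) (A : {set 'I_m}) : R :=
  \sum_(g in A) v i g.

Definition normalized_additive {R : numDomainType} {n m : nat}
  (v : 'I_n -> 'I_m -> R) : Prop :=
  (forall i g, 0 <= v i g) /\ (forall i, util v i [set: 'I_m] = 1).

(* An allocation (partition of M into n bundles, possibly empty) is encoded
   by the map sending each good to its owner. *)
Definition alloc (n m : nat) := {ffun 'I_m -> 'I_n}.

Definition bundle {n m : nat} (A : alloc n m) (i : 'I_n) : {set 'I_m} :=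
  [set g | A g == i].

Definition cardinal {n m : nat} (k : nat) (A : alloc n m) : Prop :=
  forall i, (#|bundle A i| <= k)%N.

Definition USW {R : numDomainType} {n m : nat}
  (v : 'I_n -> 'I_m -> R) (A : alloc n m) : R :=
  \sum_(i < n) util v i (bundle A i).

Definition usw_optimal {R : numDomainType} {n m : nat}
  (v : 'I_n -> 'I_m -> R) (A : alloc n m) : Prop :=
  forall B : alloc n m, USW v B <= USW v A.

(* Main.v *)
Require Import Defs.
From mathcomp Require Import all_boot all_order all_algebra.
From mathcomp Require Import zify lra.
Import Order.TTheory GRing.Theory Num.Theory.
Local Open Scope ring_scope.
Set Implicit Arguments. Unset Strict Implicit. Unset Printing Implicit Defensive.
Section Aux.
Variable R : realFieldType.

Lemma avg_max (I : finType) (c : I -> nat) (X : I -> R) :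
  (0 < \sum_i c i)%N ->
  exists i, (0 < c i)%N /\ \sum_i (c i)%:R * X i <= (\sum_i c i)%:R * X i.
Proof.
move=> C0.
have [i ci] : exists i, (0 < c i)%N.
  apply/existsP; apply: contraLR C0; rewrite negb_exists => /forallP H.
  by rewrite -leqNgt leqn0 sum_nat_eq0; apply/forallP=> i; have := H i; rewrite lt0n negbK.
suff /existsP [j /andP [H1 H2]] : [exists j, (0 < c j)%N && (\sum_i (c i)%:R * X i <= (\sum_i c i)%:R * X j)].
  by exists j.
apply: contraT; rewrite negb_exists => /forallP H.
set S := \sum_i (c i)%:R * X i.
have : \sum_(j | (0 < c j)%N) (c j)%:R * ((\sum_i c i)%:R * X j) <
       \sum_(j | (0 < c j)%N) (c j)%:R * S.
  apply: ltr_sum; first by apply/hasP; exists i; rewrite ?mem_index_enum.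
  move=> j cj; have := H j; rewrite cj /= -ltNge => HS.
  by rewrite ltr_pM2l // ltr0n.
have E F : \sum_(j | (0 < c j)%N) (c j)%:R * F j = \sum_j (c j)%:R * (F j : R).
  rewrite [RHS](bigID (fun j => (0 < c j)%N)) /= [X in _ = _ + X]big1 ?addr0 //.
  by move=> j; rewrite lt0n negbK => /eqP ->; rewrite mul0r.
rewrite !E -mulr_suml.
idtac.
rewrite (eq_bigr (fun j => (\sum_i c i)%:R * ((c j)%:R * X j))); last by move=> j _; rewrite mulrCA.
by rewrite -mulr_sumr -/S -natr_sum ltxx.
Qed.

Lemma avg_min (I : finType) (c : I -> nat) (X : I -> R) :
  (0 < \sum_i c i)%N ->
  exists i, (0 < c i)%N /\ (\sum_i c i)%:R * X i <= \sum_i (c i)%:R * X i.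
Proof.
move=> /(@avg_max I c (fun i => - X i)) [i [ci H]]; exists i; split=> //.
move: H; rewrite mulrN (eq_bigr (fun i => - ((c i)%:R * X i))) ?sumrN ?lerN2 //.
by move=> j _; rewrite mulrN.
Qed.

Lemma keep_exists (T : finType) (f : T -> R) (k : nat) (A : {set T}) :
  (k <= #|A|)%N -> exists K : {set T}, K \subset A /\ #|K| = k /\
    k%:R * \sum_(g in A) f g <= (#|A|)%:R * \sum_(g in K) f g.
Proof.
case: k => [|k] Hk.
  by exists set0; rewrite sub0set cards0 big_set0 mul0r mulr0.
move Ht: #|A| => t; rewrite Ht in Hk.
elim: t A Ht Hk => [|t IH] A Ht Hk; first by [].
have [Hkt|Hkt] := eqVneq k t.
  by exists A; rewrite subxx Ht Hkt.
have Hk' : (k.+1 <= t)%N by rewrite ltn_neqAle Hkt -ltnS Hk.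
have cE : (\sum_g nat_of_bool (g \in A) = #|A|)%N.
  by rewrite -sum1_card [RHS]big_mkcond /=; apply eq_bigr => g _; case: (g \in A).
have sE : \sum_g (nat_of_bool (g \in A))%:R * f g = \sum_(g in A) f g.
  by rewrite [RHS]big_mkcond /=; apply eq_bigr => g _; case: (g \in A); rewrite ?mul1r ?mul0r.
have [x [xA Hx]] := @avg_min T (fun g => nat_of_bool (g \in A)) f
    ltac:(by rewrite cE Ht).
rewrite cE sE Ht in Hx.
move: xA; case xA : (x \in A) => // _.
have HA' : #|A :\ x| = t by move: Ht; rewrite (cardsD1 x A) xA add1n => -[].
have [K [KA [cK HK]]] := IH (A :\ x) HA' Hk'.
exists K; split; first by apply: subset_trans KA (subsetDl _ _).
split=> //.
have fA : \sum_(g in A) f g = f x + \sum_(g in A :\ x) f g.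
  by rewrite (bigD1 x) //=; congr (_ + _); apply eq_bigl => g; rewrite !inE andbC.
rewrite fA in Hx *.
set a := \sum_(g in A :\ x) f g in HK fA Hx *.
set b := \sum_(g in K) f g in HK *.
have Tp : 0 < t%:R :> R by rewrite ltr0n; case: t Hk' {IH Hkt HK HA' Ht Hx Hk}.
rewrite -(ler_pM2l Tp).
have h1 : t%:R * f x <= a by move: Hx; rewrite -addn1 natrD mulrDl mul1r [f x + a]addrC lerD2r.
have h2 : k.+1%:R * (t%:R * f x) <= k.+1%:R * a by rewrite ler_wpM2l.
have h3 : (t%:R + 1) * (k.+1%:R * a) <= (t%:R + 1) * (t%:R * b).
  by rewrite ler_wpM2l // addr_ge0.
rewrite -addn1 natrD.
set K1 := k.+1%:R in h2 h3 *; set T1 := t%:R in Tp h1 h2 h3 *.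
nra.
Qed.

Lemma assign_exists (T I : finType) (v : I -> T -> R) (i0 : I)
  (c : I -> nat) (L : {set T}) :
 (#|L| <= \sum_i c i)%N ->
 exists sigma : T -> I,
  (forall i, #|[set g in L | sigma g == i]| <= c i)%N /\
  \sum_(g in L) \sum_i (c i)%:R * v i g <=
    (\sum_i c i)%:R * \sum_(g in L) v (sigma g) g.
Proof.
move Ht: #|L| => t.
elim: t L c Ht => [|t IH] L c Ht HC.
  have -> : L = set0 by apply/eqP; rewrite -cards_eq0 Ht.
  exists (fun _ => i0); split; first by move=> i; rewrite (_ : [set _ in _ | _] = set0) ?cards0 //; apply/setP=> g; rewrite !inE.
  by rewrite !big_set0 mulr0.
have [g0 g0L] : exists g0, g0 \in L by apply/card_gt0P; rewrite Ht.
set L' := L :\ g0.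
have HL' : #|L'| = t by move: Ht; rewrite (cardsD1 g0 L) g0L add1n => -[].
set C := (\sum_i c i)%N in HC *.
set Vc := fun g => \sum_i (c i)%:R * v i g.
pose Y j := v j g0 + (\sum_(g in L') (Vc g - v j g)) / (C%:R - 1).
have sumL F : \sum_(g in L) F g = F g0 + \sum_(g in L') (F g : R).
  by rewrite (bigD1 g0) //=; congr (_ + _); apply eq_bigl => g; rewrite !inE andbC.
have HY : \sum_j (c j)%:R * Y j = \sum_(g in L) Vc g.
  rewrite sumL.
  under eq_bigr do rewrite mulrDr.
  rewrite big_split /=; congr (_ + _).
  under eq_bigr do rewrite mulrA.
  rewrite -mulr_suml.
  rewrite (eq_bigr (fun j => \sum_(g in L') ((c j)%:R * (Vc g - v j g)))); last by move=> j _; rewrite mulr_sumr.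
  rewrite exchange_big /=.
  rewrite (eq_bigr (fun g => (C%:R - 1) * Vc g)); last first.
    move=> g _; under eq_bigr do rewrite mulrBr.
    by rewrite sumrB -mulr_suml natr_sum mulrBl mul1r.
  rewrite -mulr_sumr.
  have [C1|C1] := eqVneq (C%:R - 1 : R) 0.
    have -> : L' = set0.
      apply/eqP; rewrite -cards_eq0 HL'.
      move/eqP: C1; rewrite subr_eq0 (_ : (1 : R) = 1%:R) // eqr_nat => /eqP C1.
      by move: HC; rewrite C1 ltnS leqn0.
    by rewrite !big_set0 mulr0 mul0r.
  by rewrite mulrC mulrA mulVf // mul1r.
have C0 : (0 < C)%N by apply: leq_trans HC.
have [j [cj Hj]] := @avg_max I c Y C0.
rewrite HY in Hj.
pose c' i := (c i - (i == j))%N.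
have HC' : (\sum_i c' i = C - 1)%N.
  rewrite /C (bigD1 j) //= [in RHS](bigD1 j) //= /c' eqxx.
  rewrite (eq_bigr (fun i => c i)); last by move=> i /negbTE ->; rewrite subn0.
  have : (0 < c j)%N := cj.
  move: (\sum_(i | i != j) c i)%N => z; lia.
have [s' [Hs'1 Hs'2]] := IH L' c' HL' ltac:(by rewrite HC'; move: HC; lia).
exists (fun g => if g == g0 then j else s' g); split.
  move=> i; rewrite (cardsD1 g0) !inE g0L eqxx /=.
  have -> : [set g in L | (if g == g0 then j else s' g) == i] :\ g0 = [set g in L' | s' g == i].
    apply/setP=> g; rewrite !inE; case: (g =P g0) => //= _.
  have := Hs'1 i; rewrite /c'; case: (j =P i) => [<-|/eqP ji]; rewrite ?eqxx /=.
    by move: cj; lia.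
  by rewrite eq_sym (negbTE ji) subn0.
rewrite (sumL (fun g => v (if g == g0 then j else s' g) g)) /= eqxx.
rewrite [X in _ <= _ * (_ + X)](eq_bigr (fun g => v (s' g) g)); last first.
  by move=> g; rewrite /L' !inE => /andP [/negbTE H _]; rewrite H.
apply: (le_trans Hj); rewrite ler_wpM2l // lerD2l.
move: Hs'2; rewrite HC'.
rewrite (eq_bigr (fun g => Vc g - v j g)); last first.
  move=> g _; rewrite /Vc (bigD1 j) //= [in RHS](bigD1 j) //= /c' eqxx.
  rewrite natrB // mulrBl mul1r addrAC; congr (_ + _ - _).
  by apply eq_bigr => i /negbTE ->; rewrite subn0.
have [t0|tp] := eqVneq t 0%N.
  have -> : L' = set0 by apply/eqP; rewrite -cards_eq0 HL' t0.
  by rewrite !big_set0 mul0r.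
have Cp : 0 < (C - 1)%:R :> R by rewrite ltr0n; move: HC tp; lia.
rewrite natrB // => H.
by rewrite mulrC ler_pdivrMl //; move: Cp; rewrite natrB.
Qed.
End Aux.

Section Alloc.
Variables (R : realFieldType) (n m : nat) (v : 'I_n -> 'I_m -> R).

Lemma usw_pt (A : alloc n m) : USW v A = \sum_g v (A g) g.
Proof.
rewrite /USW /util (partition_big (fun g => A g) xpredT) //=.
apply eq_bigr => j _; apply eq_big => g; first by rewrite inE.
by rewrite inE => /eqP ->.
Qed.

Lemma opt_max (A : alloc n m) : usw_optimal v A -> forall i g, v i g <= v (A g) g.
Proof.
move=> Hopt i g.
have := Hopt [ffun x => if x == g then i else A x].
rewrite !usw_pt (bigD1 g) //= [X in _ <= X](bigD1 g) //= ffunE eqxx.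
rewrite (eq_bigr (fun x => v (A x) x)) ?lerD2r //.
by move=> x /negbTE xg; rewrite ffunE xg.
Qed.

Lemma card_part (A : alloc n m) (P : pred 'I_m) :
  #|[set g | P g]| = (\sum_j #|[set g | P g && (A g == j)]|)%N.
Proof.
rewrite -sum1_card (partition_big (fun g => A g) xpredT) //=.
apply eq_bigr => j _; rewrite -sum1_card; apply eq_bigl => g; by rewrite !inE.
Qed.
End Alloc.

Theorem lemma4 (R : realFieldType) (n m k : nat) (v : 'I_n -> 'I_m -> R)
  (Astar : alloc n m) :
  normalized_additive v ->
  (m <= k * n)%N ->
  usw_optimal v Astar ->
  (exists i, (k < #|bundle Astar i|)%N) ->
  exists (idag : 'I_n) (A : alloc n m),
    (#|bundle Astar idag| < k)%N /\ cardinal k A /\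
    1 + \sum_(i < n | (k < #|bundle Astar i|)%N)
          (k%:R / (#|bundle Astar i|)%:R) *
          (util v i (bundle Astar i) - util v idag (bundle Astar i))
      <= USW v A.
Proof.
move=> [v0 v1] Hm Hopt [j0 Hj0].
have vmax := opt_max Hopt.
set s := fun i => #|bundle Astar i|.
have hsum : (\sum_i s i = m)%N.
  apply: (etrans _ (card_ord m)); rewrite /s -cardsT (card_part Astar xpredT).
  by apply eq_bigr => j _; apply eq_card => g; rewrite !inE.
pose c i := (k - s i)%N.
pose C := (\sum_i c i)%N.
pose Vc g := \sum_i (c i)%:R * v i g.
pose f g := C%:R * v (Astar g) g - Vc g.
have HK : forall j, exists K : {set 'I_m}, K \subset bundle Astar j /\
    #|K| = minn k (s j) /\
    (minn k (s j))%:R * \sum_(g in bundle Astar j) f g <= (s j)%:R * \sum_(g in K) f g.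
  by move=> j; apply: keep_exists; rewrite geq_minr.
have [K HK'] := fin_all_exists HK.
have memK : forall g j, g \in K j -> Astar g = j.
  by move=> g j /(subsetP (proj1 (HK' j))); rewrite inE => /eqP.
pose L := [set g | g \notin K (Astar g)].
have cardKept : #|[set g | g \in K (Astar g)]| = (\sum_j minn k (s j))%N.
  rewrite (card_part Astar); apply eq_bigr => j _.
  rewrite -(proj1 (proj2 (HK' j))); apply eq_card => g; rewrite !inE.
  apply/andP/idP => [[H /eqP E]|H]; first by rewrite -E.
  by rewrite (memK _ _ H) H eqxx.
have cardL : (#|L| + \sum_j minn k (s j) = m)%N.
  apply: (etrans _ (card_ord m)); rewrite -cardKept addnC -(cardsC [set g | g \in K (Astar g)]).
  by congr (_ + _); apply eq_card => g; rewrite !inE.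
have e1 : (\sum_j minn k (s j) + C = k * n)%N.
  rewrite /C -big_split /=.
  rewrite (eq_bigr (fun=> k)); last first.
    move=> j _; rewrite /c /s; move: #|bundle Astar j| => x; lia.
  by rewrite sum_nat_const card_ord mulnC.
have LC : (#|L| <= C)%N.
  have H : forall a b d, (a + b = m -> b + d = k * n -> m <= k * n -> a <= d)%N by lia.
  exact: H cardL e1 Hm.
have C0 : (0 < C)%N.
  apply: leq_trans LC; apply/card_gt0P.
  have : (0 < #|bundle Astar j0 :\: K j0|)%N.
    rewrite cardsD (setIidPr (proj1 (HK' j0))) (proj1 (proj2 (HK' j0))).
    by move: Hj0; rewrite /s; move: #|bundle Astar j0| => x; lia.
  move/card_gt0P => [g]; rewrite !inE => /andP [gK /eqP gA].
  by exists g; rewrite inE gA.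
have [sg [Hcap Hval]] := @assign_exists R _ _ v j0 c L LC.
pose B : alloc n m := [ffun g => if g \in L then sg g else Astar g].
have cardB : cardinal k B.
  move=> i.
  have sub : bundle B i \subset [set g in L | sg g == i] :|: K i.
    apply/subsetP => g; rewrite !inE ffunE; case: ifP => gL /eqP <-.
      by move: gL; rewrite inE => ->; rewrite eqxx.
    by move: gL; rewrite inE => /negbFE ->; rewrite orbT.
  apply: leq_trans (subset_leq_card sub) _.
  rewrite cardsU; apply: leq_trans (leq_subr _ _) _.
  have := Hcap i; rewrite (proj1 (proj2 (HK' i))) /c.
  move: (#|_|) (s i) => a b; lia.
pose T' i := 1 + \sum_j ((minn k (s j))%:R / (s j)%:R) *
   (util v j (bundle Astar j) - util v i (bundle Astar j)).
have [id [cid Hid]] := @avg_min R _ c T' C0.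
exists id, B; split.
  by move: cid; rewrite /c /s; move: #|_| => x; lia.
split; first exact: cardB.
have step1 : 1 + \sum_(i < n | (k < #|bundle Astar i|)%N)
          (k%:R / (#|bundle Astar i|)%:R) *
          (util v i (bundle Astar i) - util v id (bundle Astar i)) <= T' id.
  rewrite /T' lerD2l [X in _ <= X](bigID (fun j => (k < s j)%N)) /=.
  rewrite -[X in X <= _]addr0; apply: lerD.
    rewrite le_eqVlt; apply/orP; left; apply/eqP; apply: eq_bigr => j hj; congr (_ / _ * _).
    by rewrite /s (minn_idPl (ltnW hj)).
  apply: sumr_ge0 => j _; apply: mulr_ge0; first by apply: divr_ge0; apply: ler0n.
  rewrite subr_ge0 /util; apply: ler_sum => g; rewrite inE => /eqP <-; exact: vmax.
have step2 : \sum_i (c i)%:R * T' i <= C%:R * USW v B.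
  have one : forall i, \sum_g v i g = 1.
    by move=> i; rewrite -(v1 i) /util; apply: eq_bigl => g; rewrite inE.
  have eqA : forall j, \sum_i (c i)%:R * (util v j (bundle Astar j) - util v i (bundle Astar j))
      = \sum_(g in bundle Astar j) f g.
    move=> j; rewrite /f sumrB.
    under eq_bigr do rewrite mulrBr.
    rewrite sumrB -mulr_suml -natr_sum; congr (_ - _).
      by rewrite /util mulr_sumr; apply eq_bigr => g; rewrite inE => /eqP ->.
    rewrite /util /Vc; under eq_bigr do rewrite mulr_sumr.
    by rewrite exchange_big.
  have eq1 : \sum_i (c i)%:R * T' i = \sum_g Vc g +
      \sum_j ((minn k (s j))%:R / (s j)%:R) * \sum_(g in bundle Astar j) f g.
    rewrite /T'; under eq_bigr do rewrite mulrDr mulr1.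
    rewrite big_split /=; congr (_ + _).
      rewrite /Vc exchange_big /=; apply eq_bigr => i _; by rewrite -mulr_sumr one mulr1.
    under eq_bigr do rewrite mulr_sumr.
    rewrite exchange_big /=; apply eq_bigr => j _.
    rewrite -eqA mulr_sumr; apply eq_bigr => i _; by rewrite mulrCA.
  have eq2 : forall j, ((minn k (s j))%:R / (s j)%:R) * \sum_(g in bundle Astar j) f g
      <= \sum_(g in K j) f g.
    move=> j; have [KA [cK H]] := HK' j.
    case: (posnP (s j)) => sj.
      have -> : K j = set0 by apply/eqP; rewrite -cards_eq0 cK sj minn0.
      by rewrite sj invr0 mulr0 mul0r big_set0.
    rewrite mulrAC mulrC ler_pdivrMl //; by rewrite ltr0n.
  have eq3 : \sum_j \sum_(g in K j) f g = \sum_(g | g \notin L) f g.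
    rewrite [RHS](partition_big (fun g => Astar g) xpredT) //=.
    apply eq_bigr => j _; apply eq_bigl => g; rewrite inE negbK.
    apply/idP/andP => [H|[H /eqP E]]; first by rewrite (memK _ _ H) H eqxx.
    by rewrite -E.
  have eqB : USW v B = \sum_(g in L) v (sg g) g + \sum_(g | g \notin L) v (Astar g) g.
    rewrite usw_pt (bigID (fun g => g \in L)) /=; congr (_ + _); apply eq_bigr => g gL;
      rewrite ffunE ?gL // (negbTE gL) //.
  rewrite eq1 eqB mulrDr.
  apply: le_trans (_ : _ <= \sum_g Vc g + \sum_(g | g \notin L) f g) _.
    rewrite lerD2l -eq3; apply: ler_sum => j _; exact: eq2 j.
  rewrite (bigID (fun g => g \in L) _ Vc) /= -addrA.
  have -> : \sum_(g | g \notin L) Vc g + \sum_(g | g \notin L) f g =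
      C%:R * \sum_(g | g \notin L) v (Astar g) g.
    rewrite -big_split mulr_sumr; apply eq_bigr => g _; rewrite /f /=; by rewrite addrC subrK.
  by apply: lerD Hval (le_refl _).
have Cp : 0 < C%:R :> R by rewrite ltr0n.
rewrite -(ler_pM2l Cp); apply: le_trans (ler_wpM2l (ler0n _ _) step1) _.
by apply: le_trans Hid step2.
Qed.
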